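(* Assume the linear payoff assumption. Let $X=\begin{bmatrix}A(\nu^* )\\ B(\mu^* )\end{bmatrix}\in\mathbb{R}^{(m+n-2)\times d}$ and $y=\begin{bmatrix}c(\mu^* )\\ d(\nu^* )\end{bmatrix}$. Assume $X$ has full row rank and its smallest singular value satisfies $\sigma_{m+n-2}(X)\ge\sigma_b>0$. Let $\theta^*_{\min}=X^\dagger y$ be the minimum-norm solution of $X\theta=y$, where ${}^\dagger$ is the Moore–Penrose pseudoinverse. Let $(a^k,b^k)$, $k\le N$, be i.i.d. with $a^k\sim\mu^*$ and $b^k\sim\nu^*$ independent, and let $\widehat\mu,\widehat\nu$ be the empirical frequencies. Set $$\widehat\theta=\begin{bmatrix}A(\widehat\nu)\\ B(\widehat\mu)\end{bmatrix}^\dagger\begin{bmatrix}c(\widehat\mu)\\ d(\widehat\nu)\end{bmatrix}.$$ Then for every $\delta\in(0,1)$ there are $N_0$ and $C$ (depending on $\phi,\eta,\sigma_b,\mu^*,\nu^*,\delta$ but not on $N$) such that for $N\ge N_0$, with probability at least $1-\delta$, $$\|\widehat\theta-\theta^*_{\min}\|\le C\,\frac{m^2+n^2}{\sqrt N}.$$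
   Context: Let $m,n\ge 2$, $\mathcal A=\{1,\dots,m\}$, $\mathcal B=\{1,\dots,n\}$, and $\eta>0$. For a payoff matrix $Q\in\mathbb{R}^{m\times n}$, the entropy-regularized zero-sum matrix game is $$\max_{\mu\in\Delta(\mathcal A)}\min_{\nu\in\Delta(\mathcal B)}\ \mu^\top Q\nu+\eta^{-1}\mathcal H(\mu)-\eta^{-1}\mathcal H(\nu),\qquad \mathcal H(\pi)=-\sum_i\pi_i\log\pi_i .$$ Its unique saddle point, the quantal response equilibrium (QRE) $(\mu,\nu)$, is characterized by $$\mu(a)=\frac{\exp\big(\eta\sum_b Q(a,b)\nu(b)\big)}{\sum_{a'}\exp\big(\eta\sum_bQ(a',b)\nu(b)\big)},\qquad \nu(b)=\frac{\exp\big(-\eta\sum_a Q(a,b)\mu(a)\big)}{\sum_{b'}\exp\big(-\eta\sum_aQ(a,b')\mu(a)\big)}.$$ Linear payoff assumption: there are a feature map $\phi:\mathcal A\times\mathcal B\to\mathbb{R}^d$ and $\theta^*\in\mathbb{R}^d$ with $\|\theta^*\|^2\le M$ such that $Q(a,b)=\langle\phi(a,b),\theta^*\rangle$ for all $(a,b)$. $(\mu^*,\nu^* )$ denotes the QRE of this $Q$; all its entries are positive. For $\mu\in\Delta(\mathcal A)$ and $\nu\in\Delta(\mathcal B)$ with positive entries, define: - $A(\nu)\in\mathbb{R}^{(m-1)\times d}$, whose row indexed by $a=2,\dots,m$ is $\sum_{b}\nu(b)\,(\phi(a,b)-\phi(1,b))^\top$; - $B(\mu)\in\mathbb{R}^{(n-1)\times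 d}$, whose row indexed by $b=2,\dots,n$ is $\sum_a\mu(a)\,(\phi(a,b)-\phi(a,1))^\top$; - $c(\mu)=\big(\eta^{-1}\log(\mu(a)/\mu(1))\big)_{a=2}^m\in\mathbb{R}^{m-1}$; - $d(\nu)=\big(-\eta^{-1}\log(\nu(b)/\nu(1))\big)_{b=2}^n\in\mathbb{R}^{n-1}$. *)

(* Defs.v *)
From HB Require Import structures.
From mathcomp Require Import all_boot all_order all_algebra.
From mathcomp Require Import boolp classical_sets reals.
From mathcomp Require Import sequences exp.
Set Implicit Arguments. Unset Strict Implicit. Unset Printing Implicit Defensive.
Import Order.TTheory GRing.Theory Num.Theory.
Local Open Scope ring_scope.

Section Defs.
Variable R : realType.

Definition vnorm (p q : nat) (A : 'M[R]_(p, q)) : R :=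
  Num.sqrt (\sum_(i < p) \sum_(j < q) A i j ^+ 2).

Definition is_dist (T : finType) (p : T -> R) : Prop :=
  (forall t, 0 <= p t) /\ \sum_t p t = 1.

(* Index conventions: action "1" is ord0 and actions 2..k correspond to
   i : 'I_k.-1 via i |-> i.+1. *)
Lemma ord_zero_lt (k : nat) (i : 'I_k.-1) : (0 < k)%N.
Proof. by case: k i => [|k] [i hi]. Qed.
Lemma ord_succ_lt (k : nat) (i : 'I_k.-1) : (i.+1 < k)%N.
Proof. by case: k i => [|k] [i hi]. Qed.
Definition first_of (k : nat) (i : 'I_k.-1) : 'I_k := Ordinal (ord_zero_lt i).
Definition succ_of (k : nat) (i : 'I_k.-1) : 'I_k := Ordinal (ord_succ_lt i).

Variables (m n d : nat).

Definition Qlin (phi : 'I_m -> 'I_n -> 'rV[R]_d) (theta : 'cV[R]_d)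
  (a : 'I_m) (b : 'I_n) : R := (phi a b *m theta) 0 0.

Definition is_QRE (eta : R) (Q : 'I_m -> 'I_n -> R)
  (mu : 'I_m -> R) (nu : 'I_n -> R) : Prop :=
  [/\ is_dist mu, is_dist nu,
      (forall a, mu a = expR (eta * \sum_b Q a b * nu b) /
                        \sum_a' expR (eta * \sum_b Q a' b * nu b)) &
      (forall b, nu b = expR (- eta * \sum_a Q a b * mu a) /
                        \sum_b' expR (- eta * \sum_a Q a b' * mu a))].

Variable phi : 'I_m -> 'I_n -> 'rV[R]_d.

Definition Amat (nu : 'I_n -> R) : 'M[R]_(m.-1, d) :=
  \matrix_(i, j) (\sum_b nu b *: (phi (succ_of i) b - phi (first_of i) b)) 0 j.
Definition Bmat (mu : 'I_m -> R) : 'M[R]_(n.-1, d) :=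
  \matrix_(i, j) (\sum_a mu a *: (phi a (succ_of i) - phi a (first_of i))) 0 j.
Definition cvec (eta : R) (mu : 'I_m -> R) : 'cV[R]_(m.-1) :=
  \col_i (eta^-1 * ln (mu (succ_of i) / mu (first_of i))).
Definition dvec (eta : R) (nu : 'I_n -> R) : 'cV[R]_(n.-1) :=
  \col_i (- eta^-1 * ln (nu (succ_of i) / nu (first_of i))).

Definition Xmat (mu : 'I_m -> R) (nu : 'I_n -> R) : 'M[R]_(m.-1 + n.-1, d) :=
  col_mx (Amat nu) (Bmat mu).
Definition yvec (eta : R) (mu : 'I_m -> R) (nu : 'I_n -> R)
  : 'cV[R]_(m.-1 + n.-1) := col_mx (cvec eta mu) (dvec eta nu).

End Defs.

(* Moore-Penrose pseudoinverse: the (unique, always existing) matrix P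
   satisfying the four Penrose equations. *)
Definition penrose (R : realType) (p q : nat) (X : 'M[R]_(p, q)) (P : 'M[R]_(q, p))
  : Prop :=
  [/\ X *m P *m X = X, P *m X *m P = P,
      (X *m P)^T = X *m P & (P *m X)^T = P *m X].

Definition pinv (R : realType) (p q : nat) (X : 'M[R]_(p, q)) : 'M[R]_(q, p) :=
  match pselect (exists P, penrose X P) with
  | left h => proj1_sig (cid h)
  | right _ => 0
  end.

(* Smallest singular value of a p x q matrix with p <= q (the p-th singular
   value), via its variational characterization min_{|u|=1} |u^T X|. *)
Definition sigma_min (R : realType) (p q : nat) (X : 'M[R]_(p, q)) : R :=
  inf [set vnorm (u *m X) | u in [set u : 'rV[R]_p | vnorm u = 1]].

Section Sampling.
Variables (R : realType) (m n : nat).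

(* N i.i.d. samples (a^k, b^k) with a^k ~ mu, b^k ~ nu independent:
   a sample is s : {ffun 'I_N -> 'I_m * 'I_n}; its probability is the
   product measure. *)
Definition sample_weight (mu : 'I_m -> R) (nu : 'I_n -> R) (N : nat)
  (s : {ffun 'I_N -> 'I_m * 'I_n}) : R :=
  \prod_(k < N) (mu (s k).1 * nu (s k).2).

Definition prob_samples (mu : 'I_m -> R) (nu : 'I_n -> R) (N : nat)
  (E : {ffun 'I_N -> 'I_m * 'I_n} -> Prop) : R :=
  \sum_(s | `[< E s >]) sample_weight mu nu s.

Definition emp_mu (N : nat) (s : {ffun 'I_N -> 'I_m * 'I_n}) (a : 'I_m) : R :=
  #|[set k | (s k).1 == a]|%:R / N%:R.
Definition emp_nu (N : nat) (s : {ffun 'I_N -> 'I_m * 'I_n}) (b : 'I_n) : R :=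
  #|[set k | (s k).2 == b]|%:R / N%:R.
End Sampling.

Definition theta_min (R : realType) (m n d : nat) (eta : R)
  (phi : 'I_m -> 'I_n -> 'rV[R]_d) (mu : 'I_m -> R) (nu : 'I_n -> R) : 'cV[R]_d :=
  pinv (Xmat phi mu nu) *m yvec eta mu nu.

Definition theta_hat (R : realType) (m n d : nat) (eta : R)
  (phi : 'I_m -> 'I_n -> 'rV[R]_d) (N : nat) (s : {ffun 'I_N -> 'I_m * 'I_n})
  : 'cV[R]_d :=
  pinv (Xmat phi (emp_mu R s) (emp_nu R s)) *m yvec eta (emp_mu R s) (emp_nu R s).

(* Main.v *)
Require Import Defs.
From HB Require Import structures.
From mathcomp Require Import all_boot all_order all_algebra.
From mathcomp Require Import boolp classical_sets reals.
From mathcomp Require Import sequences exp.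
From mathcomp Require Import lra ring.
Import Order.TTheory GRing.Theory Num.Theory.
Local Open Scope ring_scope.
Set Implicit Arguments. Unset Strict Implicit.

Section Norm.
Variable R : realType.

Lemma CS (I : finType) (a b : I -> R) :
  (\sum_i a i * b i) ^+ 2 <= (\sum_i a i ^+ 2) * (\sum_i b i ^+ 2).
Proof.
have H : 0 <= \sum_i \sum_j (a i * b j - a j * b i) ^+ 2.
  by apply: sumr_ge0 => i _; apply: sumr_ge0 => j _; exact: sqr_ge0.
have E : \sum_i \sum_j (a i * b j - a j * b i) ^+ 2 =
   \sum_i \sum_j (a i ^+ 2 * b j ^+ 2) + \sum_i \sum_j (a j ^+ 2 * b i ^+ 2)
   - 2 * (\sum_i \sum_j ((a i * b i) * (a j * b j))).
  rewrite mulr_sumr -!big_split -sumrN -big_split /=; apply: eq_bigr => i _.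
  rewrite mulr_sumr -!big_split -sumrN -big_split /=; apply: eq_bigr => j _.
  ring.
have E1 : \sum_i \sum_j (a i ^+ 2 * b j ^+ 2) = (\sum_i a i ^+ 2) * (\sum_i b i ^+ 2).
  by rewrite mulr_suml; apply: eq_bigr => i _; rewrite mulr_sumr.
have E2 : \sum_i \sum_j (a j ^+ 2 * b i ^+ 2) = (\sum_i a i ^+ 2) * (\sum_i b i ^+ 2).
  by rewrite mulrC mulr_suml; apply: eq_bigr => i _; rewrite mulr_sumr; apply: eq_bigr => j _; rewrite mulrC.
have E3 : \sum_i \sum_j ((a i * b i) * (a j * b j)) = (\sum_i a i * b i) ^+ 2.
  by rewrite expr2 mulr_suml; apply: eq_bigr => i _; rewrite mulr_sumr.
rewrite E E1 E2 E3 in H; lra.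
Qed.

Definition ns p q (A : 'M[R]_(p, q)) := \sum_i \sum_j A i j ^+ 2.

Lemma ns_ge0 p q (A : 'M[R]_(p, q)) : 0 <= ns A.
Proof. by apply: sumr_ge0 => i _; apply: sumr_ge0 => j _; exact: sqr_ge0. Qed.

Lemma vnormE p q (A : 'M[R]_(p, q)) : vnorm A = Num.sqrt (ns A).
Proof. by []. Qed.

Lemma vnorm_ge0 p q (A : 'M[R]_(p, q)) : 0 <= vnorm A.
Proof. exact: sqrtr_ge0. Qed.

Lemma vnorm_sqr p q (A : 'M[R]_(p, q)) : vnorm A ^+ 2 = ns A.
Proof. by rewrite vnormE sqr_sqrtr // ns_ge0. Qed.

Lemma vnorm_eq0 p q (A : 'M[R]_(p, q)) : vnorm A = 0 -> A = 0.
Proof.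
move=> h; have h2 : ns A = 0 by rewrite -vnorm_sqr h expr0n.
rewrite /ns in h2.
apply/matrixP => i j; rewrite mxE.
have hi : \sum_j A i j ^+ 2 = 0.
  by apply: (psumr_eq0P _ h2) => // k _; apply: sumr_ge0 => l _; exact: sqr_ge0.
have := psumr_eq0P (fun k (_ : true) => sqr_ge0 (A i k)) hi.
move=> /(_ j isT).
by move/eqP; rewrite sqrf_eq0 => /eqP.
Qed.

Lemma CSmx p q (A B : 'M[R]_(p, q)) :
  (\sum_i \sum_j A i j * B i j) ^+ 2 <= ns A * ns B.
Proof.
rewrite /ns !pair_bigA /=.
exact: (CS (fun x : 'I_p * 'I_q => A x.1 x.2) (fun x => B x.1 x.2)).
Qed.

Lemma le_sqr_nonneg (x y : R) : 0 <= y -> x ^+ 2 <= y ^+ 2 -> x <= y.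
Proof. move=> hy h; nra. Qed.

Lemma vnormD p q (A B : 'M[R]_(p, q)) : vnorm (A + B) <= vnorm A + vnorm B.
Proof.
apply: le_sqr_nonneg; first by rewrite addr_ge0 // vnorm_ge0.
have e : ns (A + B) = ns A + ns B + 2 * \sum_i \sum_j A i j * B i j.
  rewrite /ns mulr_sumr -!big_split; apply: eq_bigr => i _ /=.
  rewrite mulr_sumr -!big_split; apply: eq_bigr => j _ /=; rewrite mxE; ring.
have hd : \sum_i \sum_j A i j * B i j <= vnorm A * vnorm B.
  apply: le_sqr_nonneg; first by rewrite mulr_ge0 // vnorm_ge0.
  by rewrite exprMn !vnorm_sqr CSmx.
rewrite vnorm_sqr e -!vnorm_sqr; nra.
Qed.

Lemma nsZ p q (c : R) (A : 'M[R]_(p, q)) : ns (c *: A) = c ^+ 2 * ns A.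
Proof.
rewrite /ns mulr_sumr; apply: eq_bigr => i _; rewrite mulr_sumr; apply: eq_bigr => j _.
by rewrite mxE exprMn.
Qed.

Lemma vnormZ p q (c : R) (A : 'M[R]_(p, q)) : vnorm (c *: A) = `|c| * vnorm A.
Proof. by rewrite vnormE nsZ sqrtrM ?sqr_ge0 // sqrtr_sqr. Qed.

Lemma vnormN p q (A : 'M[R]_(p, q)) : vnorm (- A) = vnorm A.
Proof. by rewrite -scaleN1r vnormZ normrN normr1 mul1r. Qed.

Lemma vnormB p q (A B : 'M[R]_(p, q)) : vnorm (A - B) <= vnorm A + vnorm B.
Proof. by rewrite -(vnormN B) vnormD. Qed.

Lemma vnorm_tr p q (A : 'M[R]_(p, q)) : vnorm A^T = vnorm A.
Proof.
rewrite !vnormE /ns exchange_big /=; congr Num.sqrt.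
by apply: eq_bigr => i _; apply: eq_bigr => j _; rewrite mxE.
Qed.

Lemma vnorm_mul p q r (A : 'M[R]_(p, q)) (B : 'M[R]_(q, r)) :
  vnorm (A *m B) <= vnorm A * vnorm B.
Proof.
apply: le_sqr_nonneg; first by rewrite mulr_ge0 // vnorm_ge0.
rewrite exprMn !vnorm_sqr /ns.
apply: (@le_trans _ _ (\sum_i \sum_k (\sum_j A i j ^+ 2) * (\sum_j B j k ^+ 2))).
  apply: ler_sum => i _; apply: ler_sum => k _.
  rewrite mxE.
  have := CS (fun j => A i j) (fun j => B j k).
  move=> h; apply: (le_trans h); rewrite le_eqVlt; apply/orP; left; apply/eqP.
  by congr (_ * _).
rewrite le_eqVlt; apply/orP; left; apply/eqP.
rewrite mulr_suml; apply: eq_bigr => i _.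
by rewrite (exchange_big _ _ _ _ _ (fun j k => B j k ^+ 2)) mulr_sumr.
Qed.

Lemma vnorm11 (A : 'M[R]_1) : vnorm A = `|A 0 0|.
Proof. by rewrite vnormE /ns !big_ord1 sqrtr_sqr. Qed.

Lemma vnorm_entry p q (A : 'M[R]_(p, q)) (c : R) : 0 <= c ->
  (forall i j, `|A i j| <= c) -> vnorm A <= Num.sqrt (p * q)%:R * c.
Proof.
move=> hc h; rewrite vnormE -(ger0_norm hc) -sqrtr_sqr -sqrtrM ?ler0n //.
rewrite ler_sqrt; last by rewrite mulr_ge0 ?ler0n ?sqr_ge0.
have -> : (p * q)%:R * c ^+ 2 = \sum_(i < p) \sum_(j < q) c ^+ 2.
  under [RHS]eq_bigr => i _ do rewrite sumr_const card_ord.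
  rewrite sumr_const card_ord natrM -mulrA mulr_natl.
  by rewrite mulr_natl.
apply: ler_sum => i _; apply: ler_sum => j _.
have := h i j; have := normr_ge0 (A i j); rewrite -real_normK ?num_real //.
move: (`|A i j|) => x; nra.
Qed.


Lemma ns_gram p q (K : 'M[R]_(p, q)) : K *m K^T = 0 -> K = 0.
Proof.
move=> h; apply: vnorm_eq0; rewrite vnormE.
have -> : ns K = 0; last by rewrite sqrtr0.
rewrite /ns; apply: big1 => i _.
transitivity ((K *m K^T) i i); last by rewrite h mxE.
by rewrite mxE; apply: eq_bigr => j _; rewrite mxE expr2.
Qed.

Section Pinv.
Variables (p q : nat) (X : 'M[R]_(p, q)) (s : R).
Hypothesis hs : 0 < s.
Hypothesis hlow : forall u : 'rV[R]_p, s * vnorm u <= vnorm (u *m X).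

Lemma inj_low r (M : 'M[R]_(r, p)) : M *m X = 0 -> M = 0.
Proof.
move=> h; apply/row_matrixP => i; rewrite row0.
apply: vnorm_eq0; apply/eqP; rewrite eq_le vnorm_ge0 andbT.
have := hlow (row i M); rewrite -row_mul h row0.
rewrite (_ : vnorm (0 : 'rV[R]_q) = 0); last first.
  by rewrite vnormE /ns !big1 ?sqrtr0 // => j _; rewrite ?big1 // => k _; rewrite mxE expr0n.
by rewrite pmulr_rle0.
Qed.

Lemma gram_unit : X *m X^T \in unitmx.
Proof.
rewrite -row_free_unit -kermx_eq0; apply/eqP.
set Kr := kermx (X *m X^T).
apply: inj_low; apply: ns_gram.
by rewrite trmx_mul mulmxA -(mulmxA Kr) mulmx_ker mul0mx.
Qed.

Lemma penrose_ex : exists P, penrose X P.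
Proof.
set A := X *m X^T.
have hA : A \in unitmx := gram_unit.
have XP : X *m (X^T *m invmx A) = 1%:M by rewrite mulmxA mulmxV.
exists (X^T *m invmx A); split.
- by rewrite XP mul1mx.
- by rewrite -(mulmxA _ X) XP mulmx1.
- by rewrite XP trmx1.
- rewrite !trmx_mul trmxK trmx_inv /A trmx_mul trmxK.
  by rewrite mulmxA.
Qed.

Lemma pinv_penrose : penrose X (pinv X).
Proof.
rewrite /pinv; case: pselect => [h|h]; last by exfalso; apply: h; exact: penrose_ex.
by case: (cid h).
Qed.

Lemma pinv_right : X *m pinv X = 1%:M.
Proof.
case: pinv_penrose => h1 _ _ _.
apply/eqP; rewrite -subr_eq0; apply/eqP; apply: inj_low.
by rewrite mulmxBl h1 mul1mx subrr.
Qed.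

Lemma pinv_range : pinv X = X^T *m ((pinv X)^T *m pinv X).
Proof.
case: pinv_penrose => _ h2 _ h4.
by rewrite mulmxA -trmx_mul h4 h2.
Qed.

Lemma pinv_XXt : pinv X *m X *m X^T = X^T.
Proof.
case: pinv_penrose => h1 _ _ h4.
by rewrite -{1}h4 -trmx_mul mulmxA h1.
Qed.

Lemma pinv_bound (v : 'cV[R]_p) : vnorm (pinv X *m v) <= vnorm v / s.
Proof.
set w := pinv X *m v.
set z := (pinv X)^T *m pinv X *m v.
have wz : w = X^T *m z.
  by rewrite /w /z [in LHS]pinv_range -mulmxA.
have hw2 : vnorm w ^+ 2 = `|(z^T *m v) 0 0|.
  have e : vnorm w ^+ 2 = (w^T *m w) 0 0.
    rewrite vnorm_sqr /ns mxE; apply: eq_bigr => i _; rewrite big_ord1 expr2.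
    by rewrite [w^T _ _]mxE.
  have e2 : (w^T *m w) 0 0 = (z^T *m v) 0 0.
    by rewrite {1}wz trmx_mul trmxK -mulmxA /w (mulmxA X) pinv_right mul1mx.
  by rewrite -e2 -e ger0_norm // sqr_ge0.
have h1 : vnorm w ^+ 2 <= vnorm z * vnorm v.
  by rewrite hw2 -vnorm11 -(vnorm_tr z) vnorm_mul.
have h2 : s * vnorm z <= vnorm w.
  by rewrite wz -(vnorm_tr (X^T *m z)) trmx_mul trmxK -(vnorm_tr z) hlow.
have h3 := vnorm_ge0 z; have h4 := vnorm_ge0 w; have h5 := vnorm_ge0 v.
rewrite ler_pdivlMr //.
have : vnorm w * (vnorm w * s) <= vnorm w * vnorm v.
  have hs' := ltW hs.
  have : s * vnorm w ^+ 2 <= s * (vnorm z * vnorm v) by rewrite ler_wpM2l.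
  have : s * vnorm z * vnorm v <= vnorm w * vnorm v by rewrite ler_wpM2r.
  nra.
move=> H; rewrite le_eqVlt in h4; case/orP: h4 => [/eqP h0|h4]; first by rewrite -h0 mul0r.
by rewrite -(ler_pM2l h4).
Qed.

End Pinv.

Lemma vnorm0 p q : vnorm (0 : 'M[R]_(p, q)) = 0.
Proof. by rewrite -(scale0r (0 : 'M[R]_(p,q))) vnormZ normr0 mul0r. Qed.

Lemma sigma_low p q (X : 'M[R]_(p, q)) sb : sb <= sigma_min X ->
  forall u : 'rV[R]_p, sb * vnorm u <= vnorm (u *m X).
Proof.
move=> hsb u.
have [h0|hpos] := eqVneq (vnorm u) 0.
  by rewrite h0 mulr0 vnorm_ge0.
have hp : 0 < vnorm u by rewrite lt_neqAle eq_sym hpos vnorm_ge0.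
set u' := (vnorm u)^-1 *: u.
have hu' : vnorm u' = 1 by rewrite vnormZ ger0_norm ?invr_ge0 ?vnorm_ge0 // mulVf.
have hinf : sigma_min X <= vnorm (u' *m X).
  apply: ge_inf; last by exists u'.
  by exists 0 => x [v _ <-]; exact: vnorm_ge0.
have : sb <= (vnorm u)^-1 * vnorm (u *m X).
  by rewrite (le_trans hsb) // (le_trans hinf) // /u' -scalemxAl vnormZ ger0_norm ?invr_ge0 ?vnorm_ge0.
by rewrite ler_pdivlMl // mulrC.
Qed.

Lemma low_perturb p q (X Xh : 'M[R]_(p, q)) sb :
  (forall u : 'rV[R]_p, sb * vnorm u <= vnorm (u *m X)) ->
  vnorm (Xh - X) <= sb / 2 ->
  forall u : 'rV[R]_p, sb / 2 * vnorm u <= vnorm (u *m Xh).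
Proof.
move=> hl hE u.
have e : u *m X = u *m Xh - u *m (Xh - X) by rewrite mulmxBr opprB addrC subrK.
have h1 := hl u; rewrite e in h1.
have h2 := vnormB (u *m Xh) (u *m (Xh - X)).
have h3 := vnorm_mul u (Xh - X).
have h4 := vnorm_ge0 u.
have h5 : vnorm u * vnorm (Xh - X) <= vnorm u * (sb / 2) by rewrite ler_wpM2l.
nra.
Qed.

Lemma perturb p q (X Xh : 'M[R]_(p, q)) (y yh : 'cV[R]_p) sb :
  0 < sb -> (forall u : 'rV[R]_p, sb * vnorm u <= vnorm (u *m X)) ->
  vnorm (Xh - X) <= sb / 2 ->
  vnorm (pinv Xh *m yh - pinv X *m y) <=
    2 / sb * (vnorm (yh - y) + vnorm (Xh - X) * vnorm (pinv X *m y))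
    + vnorm (Xh - X) * vnorm ((pinv X)^T *m pinv X *m y)
        * (1 + 2 / sb * (vnorm X + sb / 2)).
Proof.
move=> hsb hl hE.
have hsb2 : 0 < sb / 2 by rewrite divr_gt0.
have hlh := low_perturb hl hE.
set E := Xh - X; set th := pinv X *m y; set z0 := (pinv X)^T *m pinv X *m y.
set Ph := pinv Xh.
have f1 : X *m th = y by rewrite /th mulmxA (pinv_right hsb hl) mul1mx.
have f2 : th = X^T *m z0 by rewrite /th /z0 {1}(pinv_range hsb hl) -!mulmxA.
have f3 : Ph *m Xh *m Xh^T = Xh^T := pinv_XXt hsb2 hlh.
have eX : X = Xh - E by rewrite /E opprB addrC subrK.
have h1 : Ph *m y = Ph *m (Xh *m th) - Ph *m (E *m th).
  by rewrite -f1 -mulmxBr -mulmxBl -eX.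
have h2 : Ph *m (Xh *m th) = Xh^T *m z0 - Ph *m (Xh *m (E^T *m z0)).
  rewrite f2 eX linearB /= mulmxBl !mulmxBr !mulmxA f3 -!mulmxA.
  done.
have h3 : th = Xh^T *m z0 - E^T *m z0 by rewrite f2 eX linearB /= mulmxBl.
have key : Ph *m yh - th =
    Ph *m ((yh - y) - E *m th) + (E^T *m z0 - Ph *m (Xh *m (E^T *m z0))).
  rewrite !mulmxBr h1 h2 {1}h3.
  move: (Ph *m yh) (Xh^T *m z0) (Ph *m (Xh *m (E^T *m z0))) (Ph *m (E *m th)) (E^T *m z0).
  move=> a b c e f; apply/matrixP => i j; rewrite !mxE; ring.
rewrite key.
have hPh := pinv_bound hsb2 hlh.
have k6 : 0 <= 2 / sb by rewrite divr_ge0 ?ler0n ?ltW.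
have ediv : forall x, x / (sb / 2) = 2 / sb * x by move=> x; rewrite invf_div mulrC.
have k1 : vnorm (Ph *m (yh - y - E *m th)) <= 2 / sb * (vnorm (yh - y) + vnorm E * vnorm th).
  apply: (le_trans (hPh _)); rewrite ediv ler_wpM2l //.
  by apply: (le_trans (vnormB _ _)); rewrite lerD2l vnorm_mul.
have k2 : vnorm (E^T *m z0) <= vnorm E * vnorm z0.
  by rewrite -(vnorm_tr E) vnorm_mul.
have k3 : vnorm (Ph *m (Xh *m (E^T *m z0))) <= 2 / sb * ((vnorm X + sb / 2) * (vnorm E * vnorm z0)).
  apply: (le_trans (hPh _)); rewrite ediv ler_wpM2l //.
  apply: (le_trans (vnorm_mul _ _)); apply: ler_pM; rewrite ?vnorm_ge0 //.
    have : Xh = X + E by rewrite /E addrC subrK.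
    by move=> ->; apply: (le_trans (vnormD _ _)); rewrite lerD2l.
have k4 := vnormD (Ph *m (yh - y - E *m th)) (E^T *m z0 - Ph *m (Xh *m (E^T *m z0))).
have k5 := vnormB (E^T *m z0) (Ph *m (Xh *m (E^T *m z0))).
apply: (le_trans k4).
rewrite (_ : forall a b c d f g : R, a * (b + c * d) + c * f * (1 + a * g) = a * (b + c * d) + c * f + a * (g * (c * f))); last by move=> *; ring.
lra.
Qed.

End Norm.


Section Prob.
Variable R : realType.

Lemma card_natr (I : finType) (P : pred I) :
  #|[set k | P k]|%:R = \sum_k (P k)%:R :> R.
Proof.
rewrite cardsE -sum1_card natr_sum big_mkcond /=; apply: eq_bigr => k _. 
by rewrite unfold_in; case: (P k).
Qed.

Lemma sum_ffun_prod (N : nat) (T : finType) (F : 'I_N -> T -> R) :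
  \sum_(s : {ffun 'I_N -> T}) \prod_k F k (s k) = \prod_k \sum_t F k t.
Proof. by rewrite bigA_distr_bigA. Qed.

Lemma prod_if1 (I : finType) (i : I) (x : I -> R) :
  \prod_k (if k == i then x k else 1) = x i.
Proof. by rewrite -big_mkcond big_pred1_eq. Qed.

Variables (T : finType) (w1 : T -> R).
Hypothesis w1_sum : \sum_t w1 t = 1.

Lemma mass_one (N : nat) : \sum_(s : {ffun 'I_N -> T}) \prod_k w1 (s k) = 1.
Proof.
rewrite (sum_ffun_prod (fun k t => w1 t)); apply: big1 => k _; exact: w1_sum.
Qed.

Lemma E2 (N : nat) (i j : 'I_N) (g h : T -> R) : i != j ->
  \sum_(s : {ffun 'I_N -> T}) (\prod_k w1 (s k)) * (g (s i) * h (s j)) =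
  (\sum_t w1 t * g t) * (\sum_t w1 t * h t).
Proof.
move=> hij.
set G := fun k t => w1 t * ((if k == i then g t else 1) * (if k == j then h t else 1)).
transitivity (\sum_(s : {ffun 'I_N -> T}) \prod_k G k (s k)).
  apply: eq_bigr => s _; rewrite /G big_split /= big_split /=.
  by rewrite (prod_if1 i (fun k => g (s k))) (prod_if1 j (fun k => h (s k))).
rewrite sum_ffun_prod.
transitivity (\prod_k ((if k == i then \sum_t w1 t * g t else 1) *
                      (if k == j then \sum_t w1 t * h t else 1))).
  apply: eq_bigr => k _; rewrite /G.
  have [->|hki] := eqVneq k i.
    rewrite (negbTE hij) mulr1.
    by apply: eq_bigr => t _; rewrite mulr1.
  have [ekj|hkj] := eqVneq k j.
    by rewrite ?mul1r; apply: eq_bigr => t _; rewrite ?mul1r.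
  by rewrite mulr1 -{2}w1_sum; apply: eq_bigr => t _; rewrite mulr1.
by rewrite big_split /= -/(\prod_k _) (prod_if1 i (fun _ => \sum_t w1 t * g t))
  (prod_if1 j (fun _ => \sum_t w1 t * h t)).
Qed.


Hypothesis w1_ge0 : forall t, 0 <= w1 t.

Lemma var_bound (N : nat) (Y : T -> R) : (0 < N)%N ->
  \sum_t w1 t * Y t = 0 -> (forall t, Y t ^+ 2 <= 1) ->
  \sum_(s : {ffun 'I_N -> T}) (\prod_k w1 (s k)) * ((\sum_k Y (s k)) / N%:R) ^+ 2
    <= N%:R^-1.
Proof.
move=> hN hE hY.
have hN' : 0 < N%:R :> R by rewrite ltr0n.
have e : forall s : {ffun 'I_N -> T}, (\prod_k w1 (s k)) * ((\sum_k Y (s k)) / N%:R) ^+ 2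
   = N%:R^-2 * \sum_k \sum_l (\prod_k w1 (s k)) * (Y (s k) * Y (s l)).
  move=> s; rewrite expr_div_n expr2 mulr_suml.
  rewrite [X in _ = X]mulrC mulrA; congr (_ * _); rewrite mulr_sumr; apply: eq_bigr => k _.
  by rewrite mulr_sumr mulr_sumr; apply: eq_bigr => l _.
under eq_bigr => s _ do rewrite e.
rewrite -mulr_sumr.
have h : \sum_(s : {ffun 'I_N -> T}) \sum_k \sum_l (\prod_k w1 (s k)) * (Y (s k) * Y (s l))
   <= \sum_(k < N) \sum_(l < N) (k == l)%:R.
  rewrite exchange_big; apply: ler_sum => k _.
  rewrite exchange_big; apply: ler_sum => l _.
  have [<-|hkl] := eqVneq k l.
    apply: (@le_trans _ _ (\sum_(s : {ffun 'I_N -> T}) \prod_k w1 (s k))); last by rewrite mass_one.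
    apply: ler_sum => s _.
    by rewrite -expr2 ler_piMr ?prodr_ge0.
  by rewrite E2 // hE mul0r.
have hc : \sum_(k < N) \sum_(l < N) (k == l)%:R = N%:R :> R.
  rewrite -[N in RHS]card_ord -sum1_card natr_sum; apply: eq_bigr => k _.
  rewrite (bigD1 k) //= eqxx big1 ?addr0 // => l hl; by rewrite eq_sym (negbTE hl).
rewrite hc in h.
apply: (le_trans (ler_wpM2l _ h)); first by rewrite invr_ge0 exprn_ge0 // ltW.
by rewrite expr2 invfM -mulrA mulVf ?mulr1 // gt_eqF.
Qed.


Lemma markov (N : nat) (S : {ffun 'I_N -> T} -> R) (t : R) : 0 < t ->
  (forall s, 0 <= S s) ->
  1 - (\sum_(s : {ffun 'I_N -> T}) (\prod_k w1 (s k)) * S s) / t <=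
  \sum_(s : {ffun 'I_N -> T} | `[< S s <= t >]) \prod_k w1 (s k).
Proof.
move=> ht hS.
have hw : forall s : {ffun 'I_N -> T}, 0 <= \prod_k w1 (s k) by move=> s; rewrite prodr_ge0.
have := mass_one N; rewrite (bigID (fun s => `[< S s <= t >])) /= => e.
have h : \sum_(s : {ffun 'I_N -> T} | ~~ `[< S s <= t >]) \prod_k w1 (s k)
    <= (\sum_(s : {ffun 'I_N -> T}) (\prod_k w1 (s k)) * S s) / t.
  rewrite mulr_suml.
  apply: (@le_trans _ _ (\sum_(s : {ffun 'I_N -> T} | ~~ `[< S s <= t >]) (\prod_k w1 (s k)) * S s / t)).
    apply: ler_sum => s /asboolPn /negP; rewrite -ltNge => hs.
    rewrite -mulrA ler_peMr // ler_pdivlMr // mul1r; exact: ltW.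
  rewrite [X in _ <= X](bigID (fun s => `[< S s <= t >])) /= lerDr.
  apply: sumr_ge0 => s _; rewrite divr_ge0 ?mulr_ge0 // ltW //.
lra.
Qed.

End Prob.

Section Emp.
Variables (R : realType) (m n : nat) (mu : 'I_m -> R) (nu : 'I_n -> R).
Hypotheses (hmu : is_dist mu) (hnu : is_dist nu).

Definition w1 (t : 'I_m * 'I_n) := mu t.1 * nu t.2.

Lemma le_sum_term (I : finType) (F : I -> R) i : (forall j, 0 <= F j) -> F i <= \sum_j F j.
Proof.
by move=> h; rewrite (bigD1 i) //= lerDl; apply: sumr_ge0 => j _.
Qed.

Lemma sum_delta (I : finType) (a : I) (F : I -> R) : \sum_i (i == a)%:R * F i = F a.
Proof.
rewrite (bigD1 a) //= eqxx mul1r big1 ?addr0 // => i hi; by rewrite (negbTE hi) mul0r.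
Qed.

Lemma w1_sum : \sum_t w1 t = 1.
Proof.
case: hmu => _ hm; case: hnu => _ hn.
rewrite /w1 -(pair_bigA _ (fun a b => mu a * nu b)) /=.
under eq_bigr => a _ do rewrite -mulr_sumr hn mulr1.
exact: hm.
Qed.

Lemma w1_ge0 t : 0 <= w1 t.
Proof. by case: hmu => h1 _; case: hnu => h2 _; rewrite mulr_ge0. Qed.

Lemma dist_le1 (I : finType) (p : I -> R) : is_dist p -> forall i, 0 <= p i <= 1.
Proof. by case=> h1 h2 i; rewrite h1 -h2 le_sum_term. Qed.

Definition Ymu a (t : 'I_m * 'I_n) : R := (t.1 == a)%:R - mu a.
Definition Ynu b (t : 'I_m * 'I_n) : R := (t.2 == b)%:R - nu b.

Lemma Ymu_E a : \sum_t w1 t * Ymu a t = 0.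
Proof.
case: hmu => _ hm; case: hnu => _ hn.
rewrite /Ymu /w1 -(pair_bigA _ (fun a' b => mu a' * nu b * ((a' == a)%:R - mu a))) /=.
under eq_bigr => a' _ do rewrite -mulr_suml -mulr_sumr hn mulr1.
rewrite /=.
under eq_bigr => a' _ do rewrite mulrBr (mulrC (mu a')).
by rewrite sumrB sum_delta -mulr_suml hm mul1r subrr.
Qed.

Lemma Ynu_E b : \sum_t w1 t * Ynu b t = 0.
Proof.
case: hmu => _ hm; case: hnu => _ hn.
rewrite /Ynu /w1 -(pair_bigA _ (fun a b' => mu a * nu b' * ((b' == b)%:R - nu b))) /=.
under eq_bigr => a _ do under eq_bigr => b' _ do rewrite -mulrA.
under eq_bigr => a _ do rewrite -mulr_sumr.
rewrite -mulr_suml hm mul1r.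
under eq_bigr => b' _ do rewrite mulrBr (mulrC (nu b')).
by rewrite sumrB sum_delta -mulr_suml hn mul1r subrr.
Qed.

Lemma Y_sq (p : R) (b : bool) : 0 <= p <= 1 -> (b%:R - p) ^+ 2 <= 1.
Proof. by case/andP=> h1 h2; case: b => /=; nra. Qed.

Definition Sdev N (s : {ffun 'I_N -> 'I_m * 'I_n}) : R :=
  \sum_a (emp_mu R s a - mu a) ^+ 2 + \sum_b (emp_nu R s b - nu b) ^+ 2.

Lemma emp_mu_dev N (s : {ffun 'I_N -> 'I_m * 'I_n}) a : (0 < N)%N ->
  emp_mu R s a - mu a = (\sum_k Ymu a (s k)) / N%:R.
Proof.
move=> hN; rewrite /emp_mu /Ymu card_natr sumrB sumr_const card_ord.
by rewrite mulrBl -(mulr_natr (mu a)) -mulrA mulfV ?mulr1 // pnatr_eq0 -lt0n.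
Qed.

Lemma emp_nu_dev N (s : {ffun 'I_N -> 'I_m * 'I_n}) b : (0 < N)%N ->
  emp_nu R s b - nu b = (\sum_k Ynu b (s k)) / N%:R.
Proof.
move=> hN; rewrite /emp_nu /Ynu card_natr sumrB sumr_const card_ord.
by rewrite mulrBl -(mulr_natr (nu b)) -mulrA mulfV ?mulr1 // pnatr_eq0 -lt0n.
Qed.

Lemma ES_bound N : (0 < N)%N ->
  \sum_(s : {ffun 'I_N -> 'I_m * 'I_n}) (\prod_k w1 (s k)) * Sdev s <= (m + n)%:R / N%:R.
Proof.
move=> hN.
rewrite /Sdev; under eq_bigr => s _ do rewrite mulrDr mulr_sumr mulr_sumr.
rewrite big_split /= exchange_big /= [X in _ + X <= _]exchange_big /=.
rewrite natrD mulrDl.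
apply: lerD.
  rewrite -[m in X in _ <= X]card_ord -sum1_card natr_sum mulr_suml; apply: ler_sum => a _.
  under eq_bigr => s _ do rewrite emp_mu_dev //.
  rewrite mul1r; apply: var_bound => //; first exact: w1_sum.
  - exact: w1_ge0.
  - exact: Ymu_E.
  - by move=> t; apply: Y_sq; exact: dist_le1 hmu _.
rewrite -[n in X in _ <= X]card_ord -sum1_card natr_sum mulr_suml; apply: ler_sum => b _.
under eq_bigr => s _ do rewrite emp_nu_dev //.
rewrite mul1r; apply: var_bound => //; first exact: w1_sum.
- exact: w1_ge0.
- exact: Ynu_E.
- by move=> t; apply: Y_sq; exact: dist_le1 hnu _.
Qed.

End Emp.


Section Entries.
Variable R : realType.

Lemma ln_le_sub1 (x : R) : 0 < x -> ln x <= x - 1.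
Proof.
move=> hx; have := @le_ln1Dx R (x - 1); rewrite (addrC 1) subrK; apply; lra.
Qed.

Lemma ln_lip (x y c : R) : 0 < c -> c <= x -> c <= y ->
  `|ln x - ln y| <= `|x - y| / c.
Proof.
move=> hc hx hy.
have px : 0 < x by apply: lt_le_trans hx.
have py : 0 < y by apply: lt_le_trans hy.
have gen : forall u v, c <= u -> c <= v -> 0 < u -> 0 < v -> ln u - ln v <= `|u - v| / c.
  move=> u v hu hv pu pv.
  rewrite -ln_div ?posrE //.
  apply: (le_trans (ln_le_sub1 (divr_gt0 pu pv))).
  have -> : u / v - 1 = (u - v) / v by rewrite mulrBl mulfV ?gt_eqF.
  apply: (@le_trans _ _ (`|u - v| / v)); first by apply: ler_wpM2r; [rewrite invr_ge0; exact: ltW | exact: ler_norm].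
  by rewrite ler_wpM2l ?normr_ge0 // lef_pV2 ?posrE.
rewrite ler_norml; apply/andP; split; last exact: gen.
by rewrite lerNl opprB distrC gen.
Qed.

Lemma col_entry p1 p2 q (A : 'M[R]_(p1, q)) (B : 'M[R]_(p2, q)) c :
  (forall i j, `|A i j| <= c) -> (forall i j, `|B i j| <= c) ->
  forall i j, `|col_mx A B i j| <= c.
Proof.
move=> hA hB i j; rewrite -[i](splitK i); case: (split i) => k /=; by rewrite ?col_mxEu ?col_mxEd.
Qed.

Variables (m n d : nat) (phi : 'I_m -> 'I_n -> 'rV[R]_d).

Definition Kphi := \sum_a \sum_b \sum_j `|phi a b 0 j|.

Lemma le_sum_term' (I : finType) (F : I -> R) i : (forall j, 0 <= F j) -> F i <= \sum_j F j.
Proof. by move=> h; rewrite (bigD1 i) //= lerDl; apply: sumr_ge0 => j _. Qed.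

Lemma phi_le a b j : `|phi a b 0 j| <= Kphi.
Proof.
rewrite /Kphi.
apply: (le_trans _ (le_sum_term' a _)); last by move=> a'; do 2 (apply: sumr_ge0 => ? _).
apply: (le_trans _ (le_sum_term' b _)); last by move=> b'; apply: sumr_ge0 => ? _.
by apply: le_sum_term'.
Qed.

Lemma Kphi_ge0 : 0 <= Kphi.
Proof. by do 3 (apply: sumr_ge0 => ? _). Qed.

Lemma sum_diff_bound (I : finType) (D : I -> R) (f g : I -> R) (eps : R) :
  0 <= eps -> (forall b, `|D b| <= eps) -> (forall b, `|f b| <= Kphi) -> (forall b, `|g b| <= Kphi) ->
  `|\sum_b D b * (f b - g b)| <= #|I|%:R * (2 * Kphi * eps).
Proof.
move=> he hD hf hg.
apply: (le_trans (ler_norm_sum _ _ _)).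
rewrite -[#|I|]card_ord.
have -> : #|'I_#|I| |%:R * (2 * Kphi * eps) = \sum_(b : I) (2 * Kphi * eps).
  by rewrite card_ord sumr_const mulr_natl.
apply: ler_sum => b _; rewrite normrM mulrC.
apply: ler_pM; rewrite ?normr_ge0 //.
apply: (le_trans (ler_normB _ _)); have := hf b; have := hg b; lra.
Qed.

Lemma Amat_diff (nu1 nu2 : 'I_n -> R) (eps : R) : 0 <= eps ->
  (forall b, `|nu1 b - nu2 b| <= eps) ->
  forall i j, `|(Amat phi nu1 - Amat phi nu2) i j| <= 2 * (m + n)%:R * Kphi * eps.
Proof.
move=> he h i j.
have e : (Amat phi nu1 - Amat phi nu2) i j =
   \sum_b (nu1 b - nu2 b) * ((phi (succ_of i) b 0 j) - phi (first_of i) b 0 j).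
  rewrite !mxE !summxE -sumrB; apply: eq_bigr => b _.
  by rewrite !mxE; ring.
rewrite e; apply: (le_trans (sum_diff_bound he h _ _)) => [b|b|]; rewrite ?phi_le //.
rewrite card_ord natrD.
have := mulr_ge0 (mulr_ge0 (ler0n R m) Kphi_ge0) he.
have := mulr_ge0 (mulr_ge0 (ler0n R n) Kphi_ge0) he.
move=> h1 h2; nra.
Qed.

Lemma Bmat_diff (mu1 mu2 : 'I_m -> R) (eps : R) : 0 <= eps ->
  (forall a, `|mu1 a - mu2 a| <= eps) ->
  forall i j, `|(Bmat phi mu1 - Bmat phi mu2) i j| <= 2 * (m + n)%:R * Kphi * eps.
Proof.
move=> he h i j.
have e : (Bmat phi mu1 - Bmat phi mu2) i j =
   \sum_a (mu1 a - mu2 a) * ((phi a (succ_of i) 0 j) - phi a (first_of i) 0 j).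
  rewrite !mxE !summxE -sumrB; apply: eq_bigr => b _.
  by rewrite !mxE; ring.
rewrite e; apply: (le_trans (sum_diff_bound he h _ _)) => [b|b|]; rewrite ?phi_le //.
rewrite card_ord natrD.
have := mulr_ge0 (mulr_ge0 (ler0n R m) Kphi_ge0) he.
have := mulr_ge0 (mulr_ge0 (ler0n R n) Kphi_ge0) he.
move=> h1 h2; nra.
Qed.

Lemma Xmat_diff mu1 mu2 nu1 nu2 (eps : R) : 0 <= eps ->
  (forall a, `|mu1 a - mu2 a| <= eps) -> (forall b, `|nu1 b - nu2 b| <= eps) ->
  vnorm (Xmat phi mu1 nu1 - Xmat phi mu2 nu2) <=
    Num.sqrt ((m.-1 + n.-1) * d)%:R * (2 * (m + n)%:R * Kphi * eps).
Proof.
move=> he hm hn; apply: vnorm_entry.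
  by rewrite !mulr_ge0 ?ler0n ?Kphi_ge0.
rewrite /Xmat opp_col_mx add_col_mx; apply: col_entry.
  exact: Amat_diff.
exact: Bmat_diff.
Qed.

Lemma yvec_diff (eta : R) (mu1 mu2 : 'I_m -> R) (nu1 nu2 : 'I_n -> R) (eps c : R) : 0 < eta -> 0 < c -> 0 <= eps ->
  (forall a, `|mu1 a - mu2 a| <= eps) -> (forall b, `|nu1 b - nu2 b| <= eps) ->
  (forall a, c <= mu1 a) -> (forall a, c <= mu2 a) ->
  (forall b, c <= nu1 b) -> (forall b, c <= nu2 b) ->
  vnorm (yvec eta mu1 nu1 - yvec eta mu2 nu2) <=
    Num.sqrt ((m.-1 + n.-1) * 1)%:R * (2 / (eta * c) * eps).
Proof.
move=> heta hc he hm hn h1 h2 h3 h4.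
have hc' : 0 < c^-1 by rewrite invr_gt0.
have key : forall (k : nat) (f g : 'I_k -> R) (x1 x2 : 'I_k),
    (forall a, `|f a - g a| <= eps) -> (forall a, c <= f a) -> (forall a, c <= g a) ->
    `|eta^-1 * ln (f x1 / f x2) - eta^-1 * ln (g x1 / g x2)| <= 2 / (eta * c) * eps.
  move=> k f g x1 x2 hfg hf hg.
  have pf : forall a, 0 < f a by move=> a; apply: lt_le_trans (hf a).
  have pg : forall a, 0 < g a by move=> a; apply: lt_le_trans (hg a).
  rewrite -mulrBr normrM gtr0_norm ?invr_gt0 // !ln_div ?posrE //.
  have l1 := ln_lip hc (hf x1) (hg x1); have l2 := ln_lip hc (hf x2) (hg x2).
  have e1 := hfg x1; have e2 := hfg x2.
  have : `|ln (f x1) - ln (f x2) - (ln (g x1) - ln (g x2))| <= 2 * eps / c.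
    apply: (le_trans (y := `|ln (f x1) - ln (g x1)| + `|ln (f x2) - ln (g x2)|)).
      by rewrite (_ : ln (f x1) - ln (f x2) - (ln (g x1) - ln (g x2)) = (ln (f x1) - ln (g x1)) - (ln (f x2) - ln (g x2))); [exact: ler_normB | ring].
    have : `|f x1 - g x1| / c <= eps / c by apply: ler_wpM2r => //; exact: ltW.
    have : `|f x2 - g x2| / c <= eps / c by apply: ler_wpM2r => //; exact: ltW.
    have -> : 2 * eps / c = eps / c + eps / c by ring.
    lra.
  move=> hh.
  have -> : 2 / (eta * c) * eps = eta^-1 * (2 * eps / c) by rewrite invfM; ring.
  apply: ler_wpM2l => //; rewrite invr_ge0; exact: ltW.
apply: vnorm_entry; first by rewrite mulr_ge0 // divr_ge0 ?ler0n // mulr_ge0 // ltW.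
rewrite /yvec opp_col_mx add_col_mx; apply: col_entry => i j.
  by rewrite !mxE; apply: key.
rewrite !mxE !mulNr opprK addrC; apply: key => //.
by move=> a; rewrite distrC.
Qed.

End Entries.

Unset Implicit Arguments.
Set Strict Implicit.

Lemma prod_le_term (R : realType) (I : finType) (p : I -> R) i :
  (forall j, 0 <= p j <= 1) -> \prod_j p j <= p i.
Proof.
move=> h; rewrite (bigD1 i) //= ler_piMr //; first by case/andP: (h i).
by apply: prodr_ile1 => j _; exact: h.
Qed.

Lemma sq_le_sqrt (R : realType) (x S : R) : x ^+ 2 <= S -> `|x| <= Num.sqrt S.
Proof.
move=> h; rewrite -sqrtr_sqr ler_sqrt //; exact: le_trans (sqr_ge0 x) h.
Qed.

Theorem mainTheorem6 (R : realType) (m n d : nat)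
  (hm : (2 <= m)%N) (hn : (2 <= n)%N) (eta : R) (heta : 0 < eta)
  (phi : 'I_m -> 'I_n -> 'rV[R]_d) (theta_star : 'cV[R]_d) (M : R)
  (hM : vnorm theta_star ^+ 2 <= M)
  (mu_star : 'I_m -> R) (nu_star : 'I_n -> R)
  (hQRE : is_QRE eta (Qlin phi theta_star) mu_star nu_star)
  (hmu_pos : forall a, 0 < mu_star a) (hnu_pos : forall b, 0 < nu_star b)
  (sigma_b : R) (hsb : 0 < sigma_b)
  (hrank : row_free (Xmat phi mu_star nu_star))
  (hsig : sigma_b <= sigma_min (Xmat phi mu_star nu_star)) :
  forall delta : R, 0 < delta < 1 ->
  exists N0 : nat, exists C : R, forall N : nat, (N0 <= N)%N ->
    1 - delta <=
      prob_samples mu_star nu_star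
        (fun s : {ffun 'I_N -> 'I_m * 'I_n} =>
           vnorm (theta_hat eta phi s - theta_min eta phi mu_star nu_star)
             <= C * ((m ^ 2 + n ^ 2)%:R / Num.sqrt N%:R)).
Proof.
move=> delta /andP[hd0 hd1].
case: hQRE => hmu hnu _ _.
set X := Xmat phi mu_star nu_star.
set y := yvec eta mu_star nu_star.
have hl := sigma_low hsig.
have hmu01 := dist_le1 hmu; have hnu01 := dist_le1 hnu.
set c := (\prod_a mu_star a) * (\prod_b nu_star b).
have hP1 : 0 < \prod_a mu_star a by apply: prodr_gt0 => a _.
have hP2 : 0 < \prod_b nu_star b by apply: prodr_gt0 => b _.
have hP1' : \prod_a mu_star a <= 1 by apply: prodr_ile1 => a _; exact: hmu01.
have hP2' : \prod_b nu_star b <= 1 by apply: prodr_ile1 => b _; exact: hnu01.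
have hc : 0 < c by rewrite mulr_gt0.
have hca : forall a, c <= mu_star a.
  move=> a; apply: (le_trans _ (prod_le_term _ _ _ a hmu01)); rewrite ler_piMr // ltW //.
have hcb : forall b, c <= nu_star b.
  move=> b; apply: (le_trans _ (prod_le_term _ _ _ b hnu01)); rewrite /c mulrC ler_piMr // ltW //.
have hc2 : 0 < c / 2 by rewrite divr_gt0.
set KE := Num.sqrt ((m.-1 + n.-1) * d)%:R * (2 * (m + n)%:R * Kphi phi).
set Ky := Num.sqrt ((m.-1 + n.-1) * 1)%:R * (2 / (eta * (c / 2))).
have hKE : 0 <= KE by rewrite mulr_ge0 ?sqrtr_ge0 // !mulr_ge0 ?ler0n ?Kphi_ge0.
have hKy : 0 <= Ky by rewrite mulr_ge0 ?sqrtr_ge0 // divr_ge0 ?ler0n // mulr_ge0 // ltW.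
set vth := vnorm (pinv X *m y).
set vz := vnorm ((pinv X)^T *m pinv X *m y).
set L := 2 / sigma_b * (Ky + KE * vth) + KE * vz * (1 + 2 / sigma_b * (vnorm X + sigma_b / 2)).
have hsb2 : 0 <= 2 / sigma_b by rewrite divr_ge0 ?ler0n // ltW.
have hL : 0 <= L.
  have h1 := vnorm_ge0 (pinv X *m y); have h2 := vnorm_ge0 ((pinv X)^T *m pinv X *m y).
  have h3 := vnorm_ge0 X.
  apply: addr_ge0; apply: mulr_ge0 => //.
  - by apply: addr_ge0 => //; apply: mulr_ge0.
  - by apply: mulr_ge0.
  - apply: addr_ge0 => //; apply: mulr_ge0 => //; apply: addr_ge0 => //.
    by rewrite divr_ge0 // ltW.
set e0 := Num.min (c / 2) (sigma_b / (2 * (KE + 1))).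
have hKE1 : 0 < KE + 1 by rewrite ltr_pwDr.
have he0 : 0 < e0 by rewrite lt_min hc2 divr_gt0 // mulr_gt0.
have hmn : (0 < (m + n)%:R :> R) by rewrite ltr0n addn_gt0; apply/orP; left; apply: leq_trans hm.
pose N0 := (Num.Def.trunc ((m + n)%:R / (delta * e0 ^+ 2))).+1.
exists N0.
exists (L * Num.sqrt ((m + n)%:R / delta)).
move=> N hN.
have hN0 : (0 < N)%N by apply: leq_trans hN.
have hNR : 0 < N%:R :> R by rewrite ltr0n.
have hNgt : (m + n)%:R / (delta * e0 ^+ 2) < N%:R.
  by apply: (lt_le_trans (truncnS_gt _)); rewrite ler_nat.
set t := (m + n)%:R / (N%:R * delta).
have ht : 0 < t by rewrite divr_gt0 // mulr_gt0.
have hte : t <= e0 ^+ 2.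
  rewrite ler_pdivrMr ?mulr_gt0 //.
  rewrite ltr_pdivrMr ?mulr_gt0 ?exprn_gt0 // in hNgt.
  apply: ltW; apply: (lt_le_trans hNgt); rewrite le_eqVlt; apply/orP; left; apply/eqP; ring.
set C := L * Num.sqrt ((m + n)%:R / delta).
have det : forall s : {ffun 'I_N -> 'I_m * 'I_n}, Sdev mu_star nu_star s <= t ->
   vnorm (theta_hat eta phi s - theta_min eta phi mu_star nu_star)
             <= C * ((m ^ 2 + n ^ 2)%:R / Num.sqrt N%:R).
  move=> s hs.
  have hS0 : 0 <= Sdev mu_star nu_star s.
    by rewrite /Sdev addr_ge0 // sumr_ge0 // => i _; exact: sqr_ge0.
  set eps := Num.sqrt (Sdev mu_star nu_star s).
  have heps0 : 0 <= eps := sqrtr_ge0 _.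
  have heps : eps <= e0.
    rewrite /eps -(ger0_norm (ltW he0)) -sqrtr_sqr ler_sqrt ?sqr_ge0 //.
    exact: le_trans hs hte.
  have hdm : forall a, `|emp_mu R s a - mu_star a| <= eps.
    move=> a; apply: sq_le_sqrt; rewrite /Sdev.
    apply: (@le_trans _ _ (\sum_a' (emp_mu R s a' - mu_star a') ^+ 2)).
      by apply: le_sum_term => j; exact: sqr_ge0.
    by rewrite lerDl; apply: sumr_ge0 => i _; exact: sqr_ge0.
  have hdn : forall b, `|emp_nu R s b - nu_star b| <= eps.
    move=> b; apply: sq_le_sqrt; rewrite /Sdev.
    apply: (@le_trans _ _ (\sum_b' (emp_nu R s b' - nu_star b') ^+ 2)).
      by apply: le_sum_term => j; exact: sqr_ge0.
    by rewrite lerDr; apply: sumr_ge0 => i _; exact: sqr_ge0.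
  have hec : eps <= c / 2 by apply: (le_trans heps); rewrite /e0 ge_min lexx.
  have hesb : eps <= sigma_b / (2 * (KE + 1)) by apply: (le_trans heps); rewrite /e0 ge_min lexx orbT.
  have hmuh : forall a, c / 2 <= emp_mu R s a.
    move=> a; have := hdm a; rewrite ler_norml => /andP[h1 _]; have := hca a; lra.
  have hnuh : forall b, c / 2 <= emp_nu R s b.
    move=> b; have := hdn b; rewrite ler_norml => /andP[h1 _]; have := hcb b; lra.
  have hmuc : forall a, c / 2 <= mu_star a by move=> a; have := hca a; lra.
  have hnuc : forall b, c / 2 <= nu_star b by move=> b; have := hcb b; lra.
  have hE := Xmat_diff phi heps0 hdm hdn.
  rewrite mulrA -/KE in hE.
  have hEsb : vnorm (Xmat phi (emp_mu R s) (emp_nu R s) - X) <= sigma_b / 2.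
    apply: (le_trans hE).
    have : (KE + 1) * eps <= (KE + 1) * (sigma_b / (2 * (KE + 1))) by rewrite ler_wpM2l // ltW.
    have -> : (KE + 1) * (sigma_b / (2 * (KE + 1))) = sigma_b / 2.
      by field; rewrite gt_eqF.
    lra.
  have hy := yvec_diff heta hc2 heps0 hdm hdn hmuh hmuc hnuh hnuc.
  have {}hy : vnorm (yvec eta (emp_mu R s) (emp_nu R s) - y) <= Ky * eps.
    by apply: (le_trans hy); rewrite /Ky -[X in _ <= X]mulrA.
  have hP := @perturb R _ _ X (Xmat phi (emp_mu R s) (emp_nu R s)) y (yvec eta (emp_mu R s) (emp_nu R s)) sigma_b hsb hl hEsb.
  rewrite /theta_hat /theta_min -/X -/y.
  apply: (le_trans hP).
  rewrite -/vth -/vz.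
  set vE := vnorm (Xmat phi (emp_mu R s) (emp_nu R s) - X) in hE hEsb *.
  set vy := vnorm (yvec eta (emp_mu R s) (emp_nu R s) - y) in hy *.
  have hvE := vnorm_ge0 (Xmat phi (emp_mu R s) (emp_nu R s) - X).
  have hvth := vnorm_ge0 (pinv X *m y).
  have hvz := vnorm_ge0 ((pinv X)^T *m pinv X *m y).
  have hvX := vnorm_ge0 X.
  set Bf := 1 + 2 / sigma_b * (vnorm X + sigma_b / 2).
  have hBf : 0 <= Bf by rewrite addr_ge0 // mulr_ge0 // addr_ge0 // divr_ge0 // ltW.
  apply: (@le_trans _ _ (L * eps)).
    have -> : L * eps = 2 / sigma_b * (Ky * eps + KE * eps * vth) + KE * eps * vz * Bf.
      by rewrite /L /Bf; ring.
    apply: lerD.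
      apply: ler_wpM2l => //; apply: lerD => //; apply: ler_wpM2r => //.
    by apply: ler_wpM2r => //; apply: ler_wpM2r.
  have hst : eps <= Num.sqrt t by rewrite ler_sqrt // ltW.
  have e1 : Num.sqrt t = Num.sqrt ((m + n)%:R / delta) / Num.sqrt N%:R.
    have -> : t = (m + n)%:R / delta * N%:R^-1 by rewrite /t invfM; ring.
    rewrite sqrtrM ?sqrtrV // ?ler0n //.
    by rewrite divr_ge0 // ltW.
  apply: (le_trans (ler_wpM2l hL hst)); rewrite e1 mulrA -/C.
  have hC : 0 <= C by rewrite mulr_ge0 // sqrtr_ge0.
  rewrite mulrA ler_wpM2r ?invr_ge0 ?sqrtr_ge0 //.
  rewrite ler_peMr // ler1n.
  by rewrite addn_gt0 expn_gt0; apply/orP; left; apply/orP; left; apply: leq_trans hm.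
have hSge : forall s : {ffun 'I_N -> 'I_m * 'I_n}, 0 <= Sdev mu_star nu_star s.
  by move=> s; rewrite /Sdev addr_ge0 // sumr_ge0 // => i _; exact: sqr_ge0.
have hMk := markov (w1_sum hmu hnu) (w1_ge0 hmu hnu) ht hSge.
have hEs := ES_bound hmu hnu hN0.
have hdel : (\sum_(s : {ffun 'I_N -> 'I_m * 'I_n}) (\prod_k w1 mu_star nu_star (s k)) * Sdev mu_star nu_star s) / t <= delta.
  have hti : 0 <= t^-1 by rewrite invr_ge0 ltW.
  apply: (le_trans (ler_wpM2r hti hEs)).
  rewrite le_eqVlt; apply/orP; left; apply/eqP.
  rewrite /t; field.
  by rewrite !gt_eqF // -natrD.
apply: (le_trans _ (le_trans hMk _)); first lra.
rewrite /prob_samples /sample_weight (big_mkcond (fun s => `[< _ >])) [X in _ <= X]big_mkcond /=.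
apply: ler_sum => s _.
case: asboolP => h1; case: asboolP => h2 //.
- by exfalso; apply: h2; exact: det.
- by apply: prodr_ge0 => k _; exact: w1_ge0.
Qed.
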